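(* Let $(A,+,\circ)$ be a skew brace. Then $\zeta(A)$ is a central ideal of $A$, i.e. $\llbracket A,\zeta(A)\rrbracket=0$, and it contains every central ideal of $A$; thus $\zeta(A)$ is the largest central ideal of $A$.
   Context: A skew brace is a triple $(A,+,\circ)$ where $(A,+)$ and $(A,\circ)$ are groups (not necessarily abelian; $+$ is written additively) such that $x\circ(y+z)=(x\circ y)-x+(x\circ z)$ for all $x,y,z\in A$; the common neutral element is $0$, $-x$ is the $+$-inverse and $\bar x$ the $\circ$-inverse. Let $\lambda_x(y)=-x+(x\circ y)$, $x*y=-x+(x\circ y)-y$, $[x,y]_+=x+y-x-y$. An ideal is a subgroup $I$ of $(A,+)$ with $\lambda_a(I)\subseteq I$ for all $a\in A$ that is normal in both $(A,+)$ and $(A,\circ)$. A binary polynomial of $A$ is a map $A^2\to A$ of the form $(x,y)\mapsto t(c_1,\dots,c_k,x,y)$ with $t$ a term in $+,-,\circ,\bar{\ },0$ and constants $c_i\in A$; it is absorbing if $f(a,0)=f(0,a)=0$ for all $a$. For ideals $I,J$, $\llbracket I,J\rrbracket$ is the ideal generated by $\{f(i,j): i\in I,j\in J, f\text{ absorbing binary polynomial}\}$; an ideal $I$ is central if $\llbracket A,I\rrbracket=0$. The center is $\zeta(A)=\{x\in A: x*y=y*x=[x,y]_+=0\ \forall y\in A\}$. *)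

(* Defs.v *)
Record skew_brace := SkewBrace {
  carrier :> Type;
  sb_add  : carrier -> carrier -> carrier;
  sb_opp  : carrier -> carrier;
  sb_zero : carrier;
  sb_circ : carrier -> carrier -> carrier;
  sb_inv  : carrier -> carrier;
  sb_addA : forall x y z, sb_add x (sb_add y z) = sb_add (sb_add x y) z;
  sb_add0l : forall x, sb_add sb_zero x = x;
  sb_add0r : forall x, sb_add x sb_zero = x;
  sb_addNl : forall x, sb_add (sb_opp x) x = sb_zero;
  sb_addNr : forall x, sb_add x (sb_opp x) = sb_zero;
  sb_circA : forall x y z, sb_circ x (sb_circ y z) = sb_circ (sb_circ x y) z;
  sb_circ0l : forall x, sb_circ sb_zero x = x;
  sb_circ0r : forall x, sb_circ x sb_zero = x;
  sb_circVl : forall x, sb_circ (sb_inv x) x = sb_zero;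
  sb_circVr : forall x, sb_circ x (sb_inv x) = sb_zero;
  sb_compat : forall x y z,
    sb_circ x (sb_add y z) = sb_add (sb_add (sb_circ x y) (sb_opp x)) (sb_circ x z)
}.

Arguments sb_add {s} _ _.
Arguments sb_opp {s} _.
Arguments sb_zero {s}.
Arguments sb_circ {s} _ _.
Arguments sb_inv {s} _.

Section SkewBraceDefs.
Variable A : skew_brace.

Definition lam (x y : A) : A := sb_add (sb_opp x) (sb_circ x y).

Definition sb_star (x y : A) : A :=
  sb_add (sb_add (sb_opp x) (sb_circ x y)) (sb_opp y).

Definition add_comm (x y : A) : A :=
  sb_add (sb_add (sb_add x y) (sb_opp x)) (sb_opp y).

Definition is_ideal (I : A -> Prop) : Prop :=
  I sb_zero /\
  (forall x y, I x -> I y -> I (sb_add x y)) /\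
  (forall x, I x -> I (sb_opp x)) /\
  (forall a x, I x -> I (lam a x)) /\
  (forall a x, I x -> I (sb_add (sb_add a x) (sb_opp a))) /\
  (forall x y, I x -> I y -> I (sb_circ x y)) /\
  (forall x, I x -> I (sb_inv x)) /\
  (forall a x, I x -> I (sb_circ (sb_circ a x) (sb_inv a))).

Inductive bterm : Type :=
  | TVarX : bterm
  | TVarY : bterm
  | TCst : A -> bterm
  | TZero : bterm
  | TAdd : bterm -> bterm -> bterm
  | TOpp : bterm -> bterm
  | TCirc : bterm -> bterm -> bterm
  | TInv : bterm -> bterm.

Fixpoint beval (t : bterm) (x y : A) : A :=
  match t with
  | TVarX => x
  | TVarY => y
  | TCst c => c
  | TZero => sb_zero
  | TAdd t1 t2 => sb_add (beval t1 x y) (beval t2 x y)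
  | TOpp t1 => sb_opp (beval t1 x y)
  | TCirc t1 t2 => sb_circ (beval t1 x y) (beval t2 x y)
  | TInv t1 => sb_inv (beval t1 x y)
  end.

(* binary polynomial (x,y) |-> beval t x y is absorbing *)
Definition absorbing (t : bterm) : Prop :=
  forall a, beval t a sb_zero = sb_zero /\ beval t sb_zero a = sb_zero.

Definition ideal_gen (S : A -> Prop) : A -> Prop :=
  fun z => forall J, is_ideal J -> (forall s, S s -> J s) -> J z.

Definition bcomm (I J : A -> Prop) : A -> Prop :=
  ideal_gen (fun z => exists t i j, absorbing t /\ I i /\ J j /\ z = beval t i j).

Definition fullset : A -> Prop := fun _ => True.

Definition central (I : A -> Prop) : Prop :=
  forall z, bcomm fullset I z <-> z = sb_zero.

Definition zeta : A -> Prop :=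
  fun x => forall y, sb_star x y = sb_zero /\ sb_star y x = sb_zero /\ add_comm x y = sb_zero.

End SkewBraceDefs.

Arguments lam {A}. Arguments sb_star {A}. Arguments add_comm {A}.
Arguments is_ideal {A}. Arguments absorbing {A}. Arguments ideal_gen {A}.
Arguments bcomm {A}. Arguments fullset {A}. Arguments central {A}. Arguments zeta {A}.

(* Main.v *)
Require Import Defs.
From Stdlib Require Import Setoid.

Section Aux.
Variable A : skew_brace.
Local Infix "⊕" := (@sb_add A) (at level 50, left associativity).
Local Notation "⊖ x" := (@sb_opp A x) (at level 35, right associativity).
Local Infix "⊙" := (@sb_circ A) (at level 40, left associativity).
Local Notation O := (@sb_zero A).
Local Notation inv := (@sb_inv A).

Lemma addKl (x y : A) : ⊖ x ⊕ (x ⊕ y) = y.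
Proof. rewrite sb_addA, sb_addNl, sb_add0l; reflexivity. Qed.
Lemma addNKl (x y : A) : x ⊕ (⊖ x ⊕ y) = y.
Proof. rewrite sb_addA, sb_addNr, sb_add0l; reflexivity. Qed.
Lemma addKr (x y : A) : y ⊕ x ⊕ ⊖ x = y.
Proof. rewrite <- sb_addA, sb_addNr, sb_add0r; reflexivity. Qed.
Lemma addNKr (x y : A) : y ⊕ ⊖ x ⊕ x = y.
Proof. rewrite <- sb_addA, sb_addNl, sb_add0r; reflexivity. Qed.
Lemma subr0_eq (u v : A) : u ⊕ ⊖ v = O -> u = v.
Proof. intro H. rewrite <- (addNKr v u), H, sb_add0l; reflexivity. Qed.
Lemma solve_l (x w y : A) : ⊖ x ⊕ w = y -> w = x ⊕ y.
Proof. intro H. rewrite <- H, addNKl; reflexivity. Qed.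
Lemma solve_r (x u y : A) : u ⊕ ⊖ x = y -> u = y ⊕ x.
Proof. intro H. rewrite <- H, addNKr; reflexivity. Qed.
Lemma opp0 : ⊖ O = O.
Proof. rewrite <- (sb_add0l A (⊖ O)) at 1. apply sb_addNr. Qed.
Lemma opp_uniq (x w : A) : x ⊕ w = O -> ⊖ x = w.
Proof. intro H. rewrite <- (addKl x w), H, sb_add0r. reflexivity. Qed.
Lemma oppD (x y : A) : ⊖ (x ⊕ y) = ⊖ y ⊕ ⊖ x.
Proof.
  apply opp_uniq. rewrite <- sb_addA, (sb_addA A y), sb_addNr, sb_add0l, sb_addNr.
  reflexivity.
Qed.
Lemma inv_uniq (x w : A) : x ⊙ w = O -> inv x = w.
Proof.
  intro H. rewrite <- (sb_circ0r A (inv x)), <- H, sb_circA, sb_circVl, sb_circ0l.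
  reflexivity.
Qed.
Lemma invM (x y : A) : inv (x ⊙ y) = inv y ⊙ inv x.
Proof.
  apply inv_uniq. rewrite <- sb_circA, (sb_circA A y), sb_circVr, sb_circ0l, sb_circVr.
  reflexivity.
Qed.
Lemma inv0 : inv O = O.
Proof. apply inv_uniq. apply sb_circ0l. Qed.

Definition zc (x : A) := forall y, x ⊙ y = x ⊕ y /\ y ⊙ x = y ⊕ x /\ x ⊕ y = y ⊕ x.

Lemma zeta_zc x : zeta x <-> zc x.
Proof.
  split.
  - intros H y. destruct (H y) as [H1 [H2 H3]].
    unfold sb_star, add_comm in *.
    apply subr0_eq, solve_l in H1. apply subr0_eq, solve_l in H2.
    apply subr0_eq, solve_r in H3. auto.
  - intros H y. destruct (H y) as [H1 [H2 H3]].
    unfold sb_star, add_comm. rewrite H1, H2, addKl, addKl, H3, addKr, !sb_addNr.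
    auto.
Qed.

Lemma zc0 : zc O.
Proof. intro y. rewrite sb_circ0l, sb_circ0r, sb_add0l, sb_add0r. auto. Qed.

Lemma zc_add x x' : zc x -> zc x' -> zc (x ⊕ x').
Proof.
  intros Hx Hx' y.
  destruct (Hx x') as [E _].
  destruct (Hx' y) as [A1 [A2 A3]].
  destruct (Hx y) as [C1 [C2 C3]].
  repeat split.
  - rewrite <- E at 1; rewrite <- sb_circA, A1. destruct (Hx (x' ⊕ y)) as [B1 _]. rewrite B1.
    apply sb_addA.
  - rewrite <- E at 1; rewrite sb_circA, C2. destruct (Hx' (y ⊕ x)) as [_ [D2 _]]. rewrite D2.
    symmetry; apply sb_addA.
  - rewrite <- sb_addA, A3, !sb_addA, C3. reflexivity.
Qed.

Lemma zc_opp_inv x : zc x -> inv x = ⊖ x.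
Proof. intro Hx. apply inv_uniq. destruct (Hx (⊖ x)) as [E _]. rewrite E. apply sb_addNr. Qed.

Lemma zc_opp x : zc x -> zc (⊖ x).
Proof.
  intros Hx.
  assert (E1 : forall y, ⊖ x ⊙ y = ⊖ x ⊕ y).
  { intro y. assert (F := proj1 (Hx (⊖ x ⊙ y))).
    rewrite sb_circA, (proj1 (Hx (⊖ x))), sb_addNr, sb_circ0l in F.
    transitivity (⊖ x ⊕ (x ⊕ (⊖ x ⊙ y))). symmetry; apply addKl.
    rewrite <- F. reflexivity. }
  intro y. split; [|split]; [apply E1| |].
  - assert (F := proj1 (proj2 (Hx (y ⊙ ⊖ x)))).
    rewrite <- sb_circA, E1, sb_addNl, sb_circ0r in F.
    transitivity (y ⊙ ⊖ x ⊕ x ⊕ ⊖ x). symmetry; apply addKr.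
    rewrite <- F. reflexivity.
  - symmetry. transitivity (⊖ x ⊕ (x ⊕ y) ⊕ ⊖ x).
    rewrite addKl; reflexivity.
    rewrite (proj2 (proj2 (Hx y))), sb_addA, addKr. reflexivity.
Qed.

Lemma zc_circ x y : zc x -> x ⊙ y = y ⊙ x.
Proof. intro H. destruct (H y) as [a [b c]]. rewrite a, b, c. reflexivity. Qed.

Lemma zc_zero_ideal : is_ideal (fun z : A => z = O).
Proof.
  unfold is_ideal, lam. repeat split; intros; subst.
  - apply sb_add0l.
  - apply opp0.
  - rewrite sb_circ0r. apply sb_addNl.
  - rewrite sb_add0r. apply sb_addNr.
  - apply sb_circ0l.
  - apply inv0.
  - rewrite sb_circ0r. apply sb_circVr.
Qed.

Lemma zeta_ideal : is_ideal (@zeta A).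
Proof.
  unfold is_ideal. setoid_rewrite zeta_zc.
  refine (conj _ (conj _ (conj _ (conj _ (conj _ (conj _ (conj _ _))))))).
  - apply zc0.
  - apply zc_add.
  - apply zc_opp.
  - intros a x Hx. unfold lam. destruct (Hx a) as [_ [F _]]. rewrite F, addKl. exact Hx.
  - intros a x Hx. destruct (Hx a) as [_ [_ F]]. rewrite <- F, addKr. exact Hx.
  - intros x y Hx Hy. destruct (Hx y) as [F _]. rewrite F. apply zc_add; auto.
  - intros x Hx. rewrite zc_opp_inv; auto. apply zc_opp; auto.
  - intros a x Hx. rewrite <- sb_circA, (zc_circ x _ Hx), sb_circA, sb_circVr, sb_circ0l.
    exact Hx.
Qed.

Lemma shift z (Hz : zc z) (t : bterm A) :
  exists c, zc c /\ forall a, beval A t a z = beval A t a O ⊕ c.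
Proof.
  induction t as [| | k | | t1 IH1 t2 IH2 | t1 IH1 | t1 IH1 t2 IH2 | t1 IH1]; simpl.
  - exists O. split. apply zc0. intros; symmetry; apply sb_add0r.
  - exists z. split. auto. intros; symmetry; apply sb_add0l.
  - exists O. split. apply zc0. intros; symmetry; apply sb_add0r.
  - exists O. split. apply zc0. intros; symmetry; apply sb_add0r.
  - destruct IH1 as [c1 [Hc1 E1]], IH2 as [c2 [Hc2 E2]].
    exists (c1 ⊕ c2). split. apply zc_add; auto. intro a. rewrite E1, E2.
    rewrite !sb_addA. f_equal. rewrite <- !sb_addA. f_equal.
    destruct (Hc1 (beval A t2 a O)) as [_ [_ F]]. exact F.
  - destruct IH1 as [c1 [Hc1 E1]]. exists (⊖ c1). split. apply zc_opp; auto.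
    intro a. rewrite E1, oppD. destruct (zc_opp c1 Hc1 (⊖ beval A t1 a O)) as [_ [_ F]].
    exact F.
  - destruct IH1 as [c1 [Hc1 E1]], IH2 as [c2 [Hc2 E2]].
    exists (c1 ⊙ c2). split. destruct (Hc1 c2) as [F _]. rewrite F. apply zc_add; auto.
    intro a. rewrite E1, E2.
    destruct (Hc1 (beval A t1 a O)) as [_ [F1 _]]. destruct (Hc2 (beval A t2 a O)) as [_ [F2 _]].
    rewrite <- F1, <- F2.
    set (u := beval A t1 a O). set (v := beval A t2 a O).
    assert (Hc : zc (c1 ⊙ c2)). { destruct (Hc1 c2) as [F _]. rewrite F. apply zc_add; auto. }
    destruct (Hc (u ⊙ v)) as [_ [G _]]. rewrite <- G.
    rewrite <- !sb_circA. f_equal. rewrite !sb_circA. f_equal. apply zc_circ; auto.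
  - destruct IH1 as [c1 [Hc1 E1]].
    assert (Hi : zc (inv c1)). { rewrite zc_opp_inv; auto. apply zc_opp; auto. }
    exists (inv c1). split. auto.
    intro a. rewrite E1. destruct (Hc1 (beval A t1 a O)) as [_ [F1 _]]. rewrite <- F1.
    rewrite invM. destruct (Hi (inv (beval A t1 a O))) as [_ [G _]]. rewrite <- G.
    apply zc_circ; auto.
Qed.

End Aux.

Theorem mainTheorem16 (A : skew_brace) :
  is_ideal (@zeta A) /\ central (@zeta A) /\
  (forall I : A -> Prop, is_ideal I -> central I -> forall x, I x -> zeta x).
Proof.
  split; [apply zeta_ideal|]. split.
  - intro z. split.
    + intro H. apply (H (fun w => w = sb_zero)). apply zc_zero_ideal.
      intros s [t [i [j [Ht [_ [Hj ->]]]]]].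
      apply zeta_zc in Hj. destruct (shift A j Hj t) as [c [_ E]].
      pose proof (E sb_zero) as E0. destruct (Ht j) as [_ T1]. destruct (Ht sb_zero) as [T2 _].
      rewrite T1, T2, sb_add0l in E0. rewrite E, (proj1 (Ht i)), <- E0. apply sb_add0l.
    + intros -> J HJ _. exact (proj1 HJ).
  - intros I HI HC x Hx y.
    assert (G : forall t, absorbing t -> beval A t y x = sb_zero).
    { intros t Ht. apply (proj1 (HC _)). unfold bcomm, ideal_gen. intros J _ HS. apply HS. exists t, y, x.
      split; [exact Ht | split; [exact Logic.I | split; [exact Hx | reflexivity]]]. }
    split; [|split].
    + apply (G (TAdd A (TAdd A (TOpp A (TVarY A)) (TCirc A (TVarY A) (TVarX A))) (TOpp A (TVarX A)))).
      intro a; split; simpl; repeat progress rewrite ?opp0, ?sb_circ0l, ?sb_circ0r, ?sb_add0l, ?sb_add0r, ?sb_addNr, ?sb_addNl; reflexivity.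
    + apply (G (TAdd A (TAdd A (TOpp A (TVarX A)) (TCirc A (TVarX A) (TVarY A))) (TOpp A (TVarY A)))).
      intro a; split; simpl; repeat progress rewrite ?opp0, ?sb_circ0l, ?sb_circ0r, ?sb_add0l, ?sb_add0r, ?sb_addNr, ?sb_addNl; reflexivity.
    + apply (G (TAdd A (TAdd A (TAdd A (TVarY A) (TVarX A)) (TOpp A (TVarY A))) (TOpp A (TVarX A)))).
      intro a; split; simpl; repeat progress rewrite ?opp0, ?sb_circ0l, ?sb_circ0r, ?sb_add0l, ?sb_add0r, ?sb_addNr, ?sb_addNl; reflexivity.
Qed.
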